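(* Consider any proper $4$-colouring of $J$ in which none of the $13$ copies $H_c$ ($c\in\Lambda$, $|c|\le\sqrt3$) contains a monochromatic triple. Let $\gamma$ be the colour of the centre $0$, and let $L_k=2e^{i\pi k/3}$ for $k\in\mathbb{Z}/6$ be the linking vertices. Then exactly one of the following holds: (a) all six linking vertices have colour $\gamma$; (b) there is some $k$ such that $L_k,L_{k+1},L_{k+2},L_{k+3}$ have colour $\gamma$, and $L_{k+4},L_{k+5}$ share a common colour different from $\gamma$; (c) there is some $k$ such that $L_k$ and $L_{k+3}$ have colour $\gamma$, and the other four linking vertices share a common colour different from $\gamma$.
   Context: Identify $\mathbb{R}^2$ with $\mathbb{C}$. Let $\Lambda=\{a+b e^{i\pi/3}: a,b\in\mathbb{Z}\}$ be the triangular lattice. For $c\in\mathbb{C}$, let $H_c$ be the unit-distance graph on the $7$ points $c$ and $c+e^{i\pi k/3}$, $k=0,\dots,5$. A monochromatic triple in a colouring of (a copy of) $H$ is a set of three of its $7$ vertices that all receive the same colour. $J$ is the unit-distance graph on the $31$ points of $\Lambda$ at distance at most $\sqrt7$ from $0$. Equivalently, $J$ is the union of the $13$ graphs $H_c$ for $c\in\Lambda$ with $|c|\le\sqrt3$: one centred at $0$, six centred at distance $1$, and six centred at distance $\sqrt3$ from $0$. The linking vertices of $J$ are the six points $L_k=2e^{i\pi k/3}$. A linking diagonal is a pair $\{L_k,L_{k+3}\}$. *)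

(* Defs.v *)
(* Points of the triangular lattice Lambda = {a + b*w : a,b in Z},
   w = e^{i pi/3}, are represented by integer pairs (a,b). *)
From Stdlib Require Import ZArith Lia Arith.
Open Scope Z_scope.

Definition pt := (Z * Z)%type.

(* |a + b w|^2 = a^2 + a b + b^2 *)
Definition norm2 (p : pt) : Z := fst p * fst p + fst p * snd p + snd p * snd p.

Definition padd (p q : pt) : pt := (fst p + fst q, snd p + snd q).
Definition psub (p q : pt) : pt := (fst p - fst q, snd p - snd q).
Definition pscale (n : Z) (p : pt) : pt := (n * fst p, n * snd p).

Definition unit_dist (p q : pt) : Prop := norm2 (psub p q) = 1.

Definition inJ (p : pt) : Prop := norm2 p <= 7.

(* w^k = e^{i pi k/3} in lattice coordinates, k taken mod 6 *)
Definition omega_pow (k : Z) : pt :=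
  let r := k mod 6 in
  if Z.eqb r 0 then (1, 0)
  else if Z.eqb r 1 then (0, 1)
  else if Z.eqb r 2 then (-1, 1)
  else if Z.eqb r 3 then (-1, 0)
  else if Z.eqb r 4 then (0, -1)
  else (1, -1).

(* the 7 vertices of H_c: index 0 is c, index i (1<=i<=6) is c + w^(i-1) *)
Definition Hvert (c : pt) (i : nat) : pt :=
  match i with
  | O => c
  | S j => padd c (omega_pow (Z.of_nat j))
  end.

Definition no_mono_triple (col : pt -> nat) (c : pt) : Prop :=
  forall i j l : nat, (i < 7)%nat -> (j < 7)%nat -> (l < 7)%nat ->
    i <> j -> j <> l -> i <> l ->
    ~ (col (Hvert c i) = col (Hvert c j) /\ col (Hvert c j) = col (Hvert c l)).

(* proper 4-colouring of J (colours 0..3); values outside J are irrelevant *)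
Definition proper_4col_J (col : pt -> nat) : Prop :=
  (forall p, inJ p -> (col p < 4)%nat) /\
  (forall p q, inJ p -> inJ q -> unit_dist p q -> col p <> col q).

Definition Lk (k : Z) : pt := pscale 2 (omega_pow k).

Definition caseA (col : pt -> nat) : Prop :=
  forall k : Z, col (Lk k) = col (0, 0).

Definition caseB (col : pt -> nat) : Prop :=
  exists k : Z,
    col (Lk k) = col (0, 0) /\ col (Lk (k + 1)) = col (0, 0) /\
    col (Lk (k + 2)) = col (0, 0) /\ col (Lk (k + 3)) = col (0, 0) /\
    col (Lk (k + 4)) = col (Lk (k + 5)) /\ col (Lk (k + 4)) <> col (0, 0).

Definition caseC (col : pt -> nat) : Prop :=
  exists k : Z,
    col (Lk k) = col (0, 0) /\ col (Lk (k + 3)) = col (0, 0) /\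
    col (Lk (k + 1)) = col (Lk (k + 2)) /\ col (Lk (k + 2)) = col (Lk (k + 4)) /\
    col (Lk (k + 4)) = col (Lk (k + 5)) /\ col (Lk (k + 1)) <> col (0, 0).

Definition exactly_one (A B C : Prop) : Prop :=
  (A /\ ~ B /\ ~ C) \/ (~ A /\ B /\ ~ C) \/ (~ A /\ ~ B /\ C).

(* Main.v *)
Require Import Defs.
From Stdlib Require Import ZArith List Lia Arith Bool.
Import ListNotations.
Open Scope Z_scope.

Definition V : list pt := [(0,0); ((-1),0); ((-1),1); (0,(-1)); (0,1); (1,(-1)); (1,0); ((-2),1); ((-1),(-1)); ((-1),2); (1,(-2)); (1,1); (2,(-1)); ((-2),0); ((-2),2); (0,(-2)); (0,2); (2,(-2)); (2,0); ((-3),1); ((-3),2); ((-2),(-1)); ((-2),3); ((-1),(-2)); ((-1),3); (1,(-3)); (1,2); (2,(-3)); (2,1); (3,(-2)); (3,(-1))].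
Definition tbl : list (list (list nat)) := ([[];
 [[0;1]];
 [[0;1;2]; [0;2]; [1;2]];
 [[0;1;3]; [0;2;3]; [0;3]; [1;2;3]; [1;3]];
 [[0;1;4]; [0;2;4]; [0;3;4]; [0;4]; [1;2;4]; [1;3;4]; [2;3;4]; [2;4]];
 [[0;1;5]; [0;2;5]; [0;3;5]; [0;4;5]; [0;5]; [1;2;5]; [1;3;5]; [1;4;5]; [2;3;5]; [2;4;5]; [3;4;5]; [3;5]];
 [[0;1;6]; [0;2;6]; [0;3;6]; [0;4;6]; [0;5;6]; [0;6]; [1;2;6]; [1;3;6]; [1;4;6]; [1;5;6]; [2;3;6]; [2;4;6]; [2;5;6]; [3;4;6]; [3;5;6]; [4;5;6]; [4;6]; [5;6]];
 [[0;1;7]; [0;2;7]; [0;3;7]; [0;4;7]; [1;2;7]; [1;3;7]; [1;4;7]; [1;7]; [2;3;7]; [2;4;7]; [2;7]];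
 [[0;1;8]; [0;2;8]; [0;3;8]; [0;5;8]; [0;7;8]; [1;2;8]; [1;3;8]; [1;5;8]; [1;7;8]; [1;8]; [2;3;8]; [2;7;8]; [3;5;8]; [3;7;8]; [3;8]];
 [[0;1;9]; [0;2;9]; [0;4;9]; [0;6;9]; [0;7;9]; [1;2;9]; [1;4;9]; [1;7;9]; [2;4;9]; [2;6;9]; [2;7;9]; [2;9]; [4;6;9]; [4;7;9]; [4;9]];
 [[0;1;10]; [0;3;10]; [0;5;10]; [0;6;10]; [0;8;10]; [1;3;10]; [1;5;10]; [1;8;10]; [3;5;10]; [3;6;10]; [3;8;10]; [3;10]; [5;6;10]; [5;8;10]; [5;10]];
 [[0;2;11]; [0;4;11]; [0;5;11]; [0;6;11]; [0;9;11]; [2;4;11]; [2;6;11]; [2;9;11]; [4;5;11]; [4;6;11]; [4;9;11]; [4;11]; [5;6;11]; [6;9;11]; [6;11]];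
 [[0;3;12]; [0;4;12]; [0;5;12]; [0;6;12]; [0;10;12]; [0;11;12]; [3;5;12]; [3;6;12]; [3;10;12]; [4;5;12]; [4;6;12]; [4;11;12]; [5;6;12]; [5;10;12]; [5;11;12]; [5;12]; [6;10;12]; [6;11;12]; [6;12]];
 [[0;1;13]; [0;2;13]; [0;3;13]; [0;7;13]; [0;8;13]; [1;2;13]; [1;3;13]; [1;7;13]; [1;8;13]; [1;13]; [2;3;13]; [2;7;13]; [2;8;13]; [3;7;13]; [3;8;13]; [7;8;13]; [7;13]; [8;13]];
 [[0;1;14]; [0;2;14]; [0;4;14]; [0;7;14]; [0;9;14]; [1;2;14]; [1;4;14]; [1;7;14]; [1;9;14]; [1;13;14]; [2;4;14]; [2;7;14]; [2;9;14]; [2;13;14]; [2;14]; [4;7;14]; [4;9;14]; [7;9;14]; [7;13;14]; [7;14]; [9;14]];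
 [[0;1;15]; [0;3;15]; [0;5;15]; [0;8;15]; [0;10;15]; [1;3;15]; [1;5;15]; [1;8;15]; [1;10;15]; [1;13;15]; [3;5;15]; [3;8;15]; [3;10;15]; [3;13;15]; [3;15]; [5;8;15]; [5;10;15]; [8;10;15]; [8;13;15]; [8;15]; [10;15]];
 [[0;2;16]; [0;4;16]; [0;6;16]; [0;9;16]; [0;11;16]; [2;4;16]; [2;6;16]; [2;9;16]; [2;11;16]; [2;14;16]; [4;6;16]; [4;9;16]; [4;11;16]; [4;14;16]; [4;16]; [6;9;16]; [6;11;16]; [9;11;16]; [9;14;16]; [9;16]; [11;16]];
 [[0;3;17]; [0;5;17]; [0;6;17]; [0;10;17]; [0;12;17]; [3;5;17]; [3;6;17]; [3;10;17]; [3;12;17]; [3;15;17]; [5;6;17]; [5;10;17]; [5;12;17]; [5;15;17]; [5;17]; [6;10;17]; [6;12;17]; [10;12;17]; [10;15;17]; [10;17]; [12;17]];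
 [[0;4;18]; [0;5;18]; [0;6;18]; [0;11;18]; [0;12;18]; [4;5;18]; [4;6;18]; [4;11;18]; [4;12;18]; [4;16;18]; [5;6;18]; [5;11;18]; [5;12;18]; [5;17;18]; [6;11;18]; [6;12;18]; [6;16;18]; [6;17;18]; [6;18]; [11;12;18]; [11;16;18]; [11;18]; [12;17;18]; [12;18]];
 [[1;2;19]; [1;7;19]; [1;13;19]; [1;14;19]; [2;7;19]; [2;13;19]; [2;14;19]; [7;13;19]; [7;14;19]; [7;19]; [13;14;19]; [13;19]];
 [[1;2;20]; [1;7;20]; [1;13;20]; [1;14;20]; [1;19;20]; [2;7;20]; [2;13;20]; [2;14;20]; [2;19;20]; [7;13;20]; [7;14;20]; [7;19;20]; [7;20]; [13;14;20]; [13;19;20]; [14;19;20]; [14;20]; [19;20]];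
 [[1;3;21]; [1;8;21]; [1;13;21]; [1;15;21]; [3;8;21]; [3;13;21]; [3;15;21]; [8;13;21]; [8;15;21]; [8;21]; [13;15;21]; [13;21]];
 [[2;4;22]; [2;9;22]; [2;14;22]; [2;16;22]; [4;9;22]; [4;14;22]; [4;16;22]; [9;14;22]; [9;16;22]; [9;22]; [14;16;22]; [14;22]];
 [[1;3;23]; [1;8;23]; [1;13;23]; [1;15;23]; [1;21;23]; [3;8;23]; [3;13;23]; [3;15;23]; [3;21;23]; [8;13;23]; [8;15;23]; [8;21;23]; [8;23]; [13;15;23]; [13;21;23]; [15;21;23]; [15;23]; [21;23]];
 [[2;4;24]; [2;9;24]; [2;14;24]; [2;16;24]; [2;22;24]; [4;9;24]; [4;14;24]; [4;16;24]; [4;22;24]; [9;14;24]; [9;16;24]; [9;22;24]; [9;24]; [14;16;24]; [14;22;24]; [16;22;24]; [16;24]; [22;24]];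
 [[3;5;25]; [3;10;25]; [3;15;25]; [3;17;25]; [5;10;25]; [5;15;25]; [5;17;25]; [10;15;25]; [10;17;25]; [10;25]; [15;17;25]; [15;25]];
 [[4;6;26]; [4;11;26]; [4;16;26]; [4;18;26]; [6;11;26]; [6;16;26]; [6;18;26]; [11;16;26]; [11;18;26]; [11;26]; [16;18;26]; [16;26]];
 [[3;5;27]; [3;10;27]; [3;15;27]; [3;17;27]; [3;25;27]; [5;10;27]; [5;15;27]; [5;17;27]; [5;25;27]; [10;15;27]; [10;17;27]; [10;25;27]; [10;27]; [15;17;27]; [15;25;27]; [17;25;27]; [17;27]; [25;27]];
 [[4;6;28]; [4;11;28]; [4;16;28]; [4;18;28]; [4;26;28]; [6;11;28]; [6;16;28]; [6;18;28]; [6;26;28]; [11;16;28]; [11;18;28]; [11;26;28]; [11;28]; [16;18;28]; [16;26;28]; [18;26;28]; [18;28]; [26;28]];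
 [[5;6;29]; [5;12;29]; [5;17;29]; [5;18;29]; [6;12;29]; [6;17;29]; [6;18;29]; [12;17;29]; [12;18;29]; [12;29]; [17;18;29]; [17;29]];
 [[5;6;30]; [5;12;30]; [5;17;30]; [5;18;30]; [5;29;30]; [6;12;30]; [6;17;30]; [6;18;30]; [6;29;30]; [12;17;30]; [12;18;30]; [12;29;30]; [12;30]; [17;18;30]; [17;29;30]; [18;29;30]; [18;30]; [29;30]]])%nat.
Definition C : list pt := [(0,0); ((-1),0); ((-1),1); (0,(-1)); (0,1); (1,(-1)); (1,0); ((-2),1); ((-1),(-1)); ((-1),2); (1,(-2)); (1,1); (2,(-1))].

Definition pt_eqb (p q : pt) : bool := Z.eqb (fst p) (fst q) && Z.eqb (snd p) (snd q).
Lemma pt_eqb_eq p q : pt_eqb p q = true -> p = q.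
Proof. destruct p, q; unfold pt_eqb; simpl; rewrite andb_true_iff, !Z.eqb_eq; intros [-> ->]; auto. Qed.

Fixpoint posn (p : pt) (l : list pt) : nat :=
  match l with [] => 0%nat | x :: r => if pt_eqb x p then 0%nat else S (posn p r) end.
Definition pos p := posn p V.

Definition allEq (v : list nat) : bool :=
  match v with [] => true | x :: r => forallb (Nat.eqb x) r end.
Definition sat (l : list nat) (cs : list nat) : bool :=
  negb (allEq (map (fun i => nth i l 0%nat) cs)).

Definition T7 : list (list nat) :=
  flat_map (fun i => flat_map (fun j => map (fun k => [i;j;k]) (seq 0 7))
     (seq 0 7)) (seq 0 7).

Definition unitb (p q : pt) : bool := Z.eqb (norm2 (psub p q)) 1.

Definition T7d : list (list nat) :=
  filter (fun t => match t with [x;y;z] => negb (Nat.eqb x y) && negb (Nat.eqb y z) && negb (Nat.eqb x z) | _ => false end) T7.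

Definition TRI : list (list nat) :=
  flat_map (fun c => map (fun t => map (fun x => pos (Hvert c x)) t) T7d) C.

Fixpoint leqb (a b : list nat) : bool :=
  match a, b with [], [] => true | x :: a', y :: b' => Nat.eqb x y && leqb a' b' | _, _ => false end.

Definition validb (tri : list (list nat)) (cs : list nat) : bool :=
  match cs with
  | [i;j] => Nat.ltb i 31 && Nat.ltb j 31 && unitb (nth i V (0,0)) (nth j V (0,0))
  | [i;j;k] => existsb (leqb cs) tri
  | _ => false
  end.

Definition Bb (a : nat -> nat) (g r : nat) : bool :=
  Nat.eqb (a r) g && Nat.eqb (a ((r+1) mod 6)%nat) g && Nat.eqb (a ((r+2) mod 6)%nat) g
  && Nat.eqb (a ((r+3) mod 6)%nat) g && Nat.eqb (a ((r+4) mod 6)%nat) (a ((r+5) mod 6)%nat)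
  && negb (Nat.eqb (a ((r+4) mod 6)%nat) g).
Definition Cb (a : nat -> nat) (g r : nat) : bool :=
  Nat.eqb (a r) g && Nat.eqb (a ((r+3) mod 6)%nat) g
  && Nat.eqb (a ((r+1) mod 6)%nat) (a ((r+2) mod 6)%nat)
  && Nat.eqb (a ((r+2) mod 6)%nat) (a ((r+4) mod 6)%nat)
  && Nat.eqb (a ((r+4) mod 6)%nat) (a ((r+5) mod 6)%nat)
  && negb (Nat.eqb (a ((r+1) mod 6)%nat) g).
Definition Ab (a : nat -> nat) (g : nat) : bool := forallb (fun i => Nat.eqb (a i) g) (seq 0 6).

Definition xor3 (x y z : bool) : bool :=
  (x && negb y && negb z) || (negb x && y && negb z) || (negb x && negb y && z).

Definition finalb (l : list nat) : bool :=
  let g := nth 0 l 0%nat in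
  let a := fun i => nth (pos (Lk (Z.of_nat i))) l 0%nat in
  xor3 (Ab a g) (existsb (Bb a g) (seq 0 6)) (existsb (Cb a g) (seq 0 6)).

Fixpoint search (tb : list (list (list nat))) (pre : list nat) : bool :=
  match tb with
  | [] => finalb pre
  | t :: tb' => forallb (fun c => let l := pre ++ [c] in
                  if forallb (sat l) t then search tb' l else true) [0;1;2;3]%nat
  end.

Lemma search_sound tb : forall pre ext, search tb pre = true ->
  length ext = length tb -> (forall c, In c ext -> (c < 4)%nat) ->
  (forall j, (j < length tb)%nat -> forallb (sat (pre ++ firstn (S j) ext)) (nth j tb []) = true) ->
  finalb (pre ++ ext) = true.
Proof.
  induction tb as [|t tb IH]; intros pre ext Hs Hl H4 Hj.
  - destruct ext; [|discriminate]. rewrite app_nil_r. exact Hs.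
  - destruct ext as [|c ext]; [discriminate|]. cbn [search] in Hs; simpl in Hl.
    rewrite forallb_forall in Hs.
    assert (Hc : In c [0;1;2;3]%nat).
    { assert (c < 4)%nat by (apply H4; left; auto). simpl. lia. }
    specialize (Hs c Hc).
    assert (H0 := Hj 0%nat ltac:(simpl; lia)). simpl in H0. rewrite H0 in Hs. simpl in Hs.
    replace (pre ++ c :: ext) with ((pre ++ [c]) ++ ext) by (rewrite <- app_assoc; auto).
    apply IH; auto.
    + intros; apply H4; right; auto.
    + intros j Hjl. specialize (Hj (S j) ltac:(simpl; lia)). simpl in Hj.
      rewrite <- app_assoc. exact Hj.
Qed.

Definition idxs : list nat := seq 0 31.

Lemma V_len : length V = 31%nat. Proof. reflexivity. Qed.
Lemma tbl_len : length tbl = 31%nat. Proof. reflexivity. Qed.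

Lemma V_inJ : forallb (fun p => Z.leb (norm2 p) 7) V = true. Proof. vm_compute. reflexivity. Qed.
Lemma C_ok : forallb (fun c => Z.leb (norm2 c) 3 && forallb (fun x =>
   Nat.ltb (pos (Hvert c x)) 31 && pt_eqb (nth (pos (Hvert c x)) V (0,0)) (Hvert c x)) (seq 0 7)) C = true.
Proof. vm_compute. reflexivity. Qed.
Lemma T7_ok : forallb (fun t => match t with [x;y;z] => Nat.ltb x 7 && Nat.ltb y 7 && Nat.ltb z 7 && negb (Nat.eqb x y) && negb (Nat.eqb y z) && negb (Nat.eqb x z) | _ => false end) T7d = true.
Proof. vm_compute. reflexivity. Qed.
Lemma L_ok : forallb (fun i => Nat.ltb (pos (Lk (Z.of_nat i))) 31 &&
   pt_eqb (nth (pos (Lk (Z.of_nat i))) V (0,0)) (Lk (Z.of_nat i))) (seq 0 6) = true.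
Proof. vm_compute. reflexivity. Qed.
Lemma tbl_ok : let tri := TRI in forallb (fun j => forallb (fun cs => validb tri cs && forallb (fun i => Nat.leb i j) cs)
   (nth j tbl [])) (seq 0 31) = true.
Proof. vm_compute. reflexivity. Qed.
Lemma search_ok : search tbl [] = true.
Proof. vm_compute. reflexivity. Qed.

Lemma leqb_eq a b : leqb a b = true -> a = b.
Proof.
  revert b; induction a as [|x a IH]; destruct b as [|y b]; simpl; try discriminate; auto.
  rewrite andb_true_iff, Nat.eqb_eq. intros [-> H]. f_equal; auto.
Qed.

Lemma Lk_mod x y : x mod 6 = y mod 6 -> Lk x = Lk y.
Proof. intros H. unfold Lk, omega_pow. rewrite H. reflexivity. Qed.

Lemma xor3_exactly (P Q R : Prop) x y z : (P <-> x = true) -> (Q <-> y = true) ->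
  (R <-> z = true) -> xor3 x y z = true -> exactly_one P Q R.
Proof.
  intros HP HQ HR; unfold exactly_one; rewrite HP, HQ, HR.
  destruct x, y, z; simpl; intros H; try discriminate;
  [left | right; left | right; right]; repeat split; try reflexivity; intro; discriminate.
Qed.

Definition Bp (a : nat -> nat) g r : Prop :=
  a r = g /\ a ((r+1) mod 6)%nat = g /\ a ((r+2) mod 6)%nat = g /\ a ((r+3) mod 6)%nat = g /\
  a ((r+4) mod 6)%nat = a ((r+5) mod 6)%nat /\ a ((r+4) mod 6)%nat <> g.
Definition Cp (a : nat -> nat) g r : Prop :=
  a r = g /\ a ((r+3) mod 6)%nat = g /\ a ((r+1) mod 6)%nat = a ((r+2) mod 6)%nat /\
  a ((r+2) mod 6)%nat = a ((r+4) mod 6)%nat /\ a ((r+4) mod 6)%nat = a ((r+5) mod 6)%nat /\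
  a ((r+1) mod 6)%nat <> g.

Lemma Bb_iff a g r : Bb a g r = true <-> Bp a g r.
Proof.
  unfold Bb, Bp. rewrite !andb_true_iff, negb_true_iff, !Nat.eqb_eq, Nat.eqb_neq. tauto.
Qed.
Lemma Cb_iff a g r : Cb a g r = true <-> Cp a g r.
Proof.
  unfold Cb, Cp. rewrite !andb_true_iff, negb_true_iff, !Nat.eqb_eq, Nat.eqb_neq. tauto.
Qed.

Section Main.
Variable col : pt -> nat.
Hypothesis Hproper : proper_4col_J col.
Hypothesis Hnomono : forall c : pt, norm2 c <= 3 -> no_mono_triple col c.

Let full := map col V.

Lemma nth_full k : (k < 31)%nat -> nth k full 0%nat = col (nth k V (0,0)).
Proof.
  intros Hk. unfold full. rewrite nth_indep with (d' := col (0,0)).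
  - apply map_nth.
  - rewrite length_map. rewrite V_len. exact Hk.
Qed.

Lemma inJ_V p : In p V -> inJ p.
Proof.
  intros H. pose proof V_inJ as HV. rewrite forallb_forall in HV.
  specialize (HV p H). unfold inJ. apply Z.leb_le. exact HV.
Qed.

Lemma full4 c : In c full -> (c < 4)%nat.
Proof.
  unfold full. rewrite in_map_iff. intros [p [<- Hp]].
  apply (proj1 Hproper). apply inJ_V; auto.
Qed.

Lemma valid_sat cs : validb TRI cs = true -> sat full cs = true.
Proof.
  destruct cs as [|i [|j [|k [|? ?]]]]; unfold validb; try discriminate.
  - rewrite !andb_true_iff, !Nat.ltb_lt. intros [[Hi Hj] Hu].
    unfold sat. cbn [map]. rewrite !nth_full by auto. cbn [allEq forallb].
    destruct (Nat.eqb_spec (col (nth i V (0, 0))) (col (nth j V (0, 0)))) as [E|E]; [|reflexivity].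
    exfalso. revert E. apply (proj2 Hproper).
    + apply inJ_V, nth_In. rewrite V_len; auto.
    + apply inJ_V, nth_In. rewrite V_len; auto.
    + unfold unit_dist. apply Z.eqb_eq. exact Hu.
  - rewrite existsb_exists. intros [t [Ht Hl]]. apply leqb_eq in Hl. rewrite Hl. clear Hl.
    unfold TRI in Ht. apply in_flat_map in Ht as [c [Hc Ht]].
    apply in_map_iff in Ht as [t0 [<- Ht0]].
    pose proof T7_ok as HT. rewrite forallb_forall in HT. specialize (HT t0 Ht0).
    pose proof C_ok as HC. rewrite forallb_forall in HC. specialize (HC c Hc).
    rewrite andb_true_iff in HC. destruct HC as [Hn HC]. rewrite forallb_forall in HC.
    apply Z.leb_le in Hn.
    assert (Hpos : forall x, (x < 7)%nat -> nth (pos (Hvert c x)) full 0%nat = col (Hvert c x)).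
    { intros x Hx. specialize (HC x ltac:(apply in_seq; lia)).
      rewrite andb_true_iff, Nat.ltb_lt in HC. destruct HC as [H1 H2].
      rewrite nth_full by auto. apply pt_eqb_eq in H2. rewrite H2. reflexivity. }
    destruct t0 as [|x [|y [|z [|? ?]]]]; try discriminate.
    rewrite !andb_true_iff, !negb_true_iff, !Nat.ltb_lt, !Nat.eqb_neq in HT.
    destruct HT as [[[[[Hx Hy] Hz] Hxy] Hyz] Hxz].
    unfold sat. cbn [map]. rewrite !Hpos by auto. cbn [allEq forallb].
    destruct (Nat.eqb_spec (col (Hvert c x)) (col (Hvert c y))) as [E1|E1]; [|reflexivity].
    destruct (Nat.eqb_spec (col (Hvert c x)) (col (Hvert c z))) as [E2|E2]; [|reflexivity].
    exfalso. apply (Hnomono c Hn x y z); auto. split; congruence.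
Qed.

Lemma cons_ok j : (j < length tbl)%nat ->
  forallb (sat ([] ++ firstn (S j) full)) (nth j tbl []) = true.
Proof.
  intros Hj. rewrite tbl_len in Hj. change ([] ++ firstn (S j) full) with (firstn (S j) full).
  pose proof tbl_ok as H. cbv zeta in H. rewrite forallb_forall in H.
  specialize (H j ltac:(apply in_seq; lia)). rewrite forallb_forall in H.
  apply forallb_forall. intros cs Hcs. specialize (H cs Hcs).
  rewrite andb_true_iff in H. destruct H as [Hv Hle].
  rewrite forallb_forall in Hle.
  replace (sat (firstn (S j) full) cs) with (sat full cs).
  - apply valid_sat; auto.
  - unfold sat. f_equal. f_equal. apply map_ext_in. intros i Hi.
    rewrite nth_firstn. specialize (Hle i Hi). apply Nat.leb_le in Hle.
    replace (i <? S j)%nat with true; [reflexivity|]. symmetry; apply Nat.ltb_lt; lia.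
Qed.

Lemma final_full : finalb full = true.
Proof.
  change full with ([] ++ full). apply search_sound with (tb := tbl).
  - apply search_ok.
  - unfold full. rewrite length_map. reflexivity.
  - apply full4.
  - apply cons_ok.
Qed.

Let a := fun i => nth (pos (Lk (Z.of_nat i))) full 0%nat.
Let g := nth 0 full 0%nat.

Lemma g_eq : g = col (0,0).
Proof. unfold g. rewrite nth_full by lia. reflexivity. Qed.

Lemma a_eq i : (i < 6)%nat -> a i = col (Lk (Z.of_nat i)).
Proof.
  intros Hi. pose proof L_ok as H. rewrite forallb_forall in H.
  specialize (H i ltac:(apply in_seq; lia)).
  rewrite andb_true_iff, Nat.ltb_lt in H. destruct H as [H1 H2].
  unfold a. rewrite nth_full by auto. apply pt_eqb_eq in H2. rewrite H2. reflexivity.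
Qed.

Lemma Fk k (j : nat) : col (Lk (k + Z.of_nat j)) = a ((Z.to_nat (k mod 6) + j) mod 6)%nat.
Proof.
  rewrite a_eq by (apply Nat.mod_upper_bound; lia).
  f_equal. apply Lk_mod.
  rewrite Nat2Z.inj_mod, Nat2Z.inj_add, Z2Nat.id by (apply Z.mod_pos_bound; lia).
  simpl (Z.of_nat 6). rewrite Z.mod_mod by lia. rewrite Zplus_mod_idemp_l. reflexivity.
Qed.

Lemma F0 k : col (Lk k) = a (Z.to_nat (k mod 6)).
Proof.
  pose proof (Fk k 0) as H. rewrite Z.add_0_r, Nat.add_0_r in H. rewrite H.
  f_equal. apply Nat.mod_small. pose proof (Z.mod_pos_bound k 6). lia.
Qed.

Lemma tonat_r (r : nat) : (r < 6)%nat -> Z.to_nat (Z.of_nat r mod 6) = r.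
Proof. intros H. rewrite Z.mod_small by lia. apply Nat2Z.id. Qed.

Lemma tonat_lt k : (Z.to_nat (k mod 6) < 6)%nat.
Proof. pose proof (Z.mod_pos_bound k 6). lia. Qed.

Lemma caseA_iff : caseA col <-> Ab a g = true.
Proof.
  unfold caseA, Ab. rewrite forallb_forall. split.
  - intros H i Hi. apply in_seq in Hi. apply Nat.eqb_eq. rewrite a_eq by lia. rewrite g_eq. apply H.
  - intros H k. rewrite F0, <- g_eq. apply Nat.eqb_eq, H. apply in_seq. pose proof (tonat_lt k). lia.
Qed.

Lemma caseB_iff : caseB col <-> existsb (Bb a g) (seq 0 6) = true.
Proof.
  unfold caseB. rewrite existsb_exists. rewrite <- g_eq. split.
  - intros [k H]. exists (Z.to_nat (k mod 6)). split.
    + apply in_seq. pose proof (tonat_lt k). lia.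
    + apply Bb_iff. unfold Bp.
      rewrite F0 in H. change (k+1) with (k + Z.of_nat 1) in H.
      change (k+2) with (k + Z.of_nat 2) in H. change (k+3) with (k + Z.of_nat 3) in H.
      change (k+4) with (k + Z.of_nat 4) in H. change (k+5) with (k + Z.of_nat 5) in H.
      rewrite !Fk in H. exact H.
  - intros [r [Hr H]]. apply in_seq in Hr. apply Bb_iff in H. exists (Z.of_nat r).
    rewrite F0. change (Z.of_nat r + 1) with (Z.of_nat r + Z.of_nat 1).
    change (Z.of_nat r + 2) with (Z.of_nat r + Z.of_nat 2).
    change (Z.of_nat r + 3) with (Z.of_nat r + Z.of_nat 3).
    change (Z.of_nat r + 4) with (Z.of_nat r + Z.of_nat 4).
    change (Z.of_nat r + 5) with (Z.of_nat r + Z.of_nat 5).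
    rewrite !Fk, !tonat_r by lia. exact H.
Qed.

Lemma caseC_iff : caseC col <-> existsb (Cb a g) (seq 0 6) = true.
Proof.
  unfold caseC. rewrite existsb_exists. rewrite <- g_eq. split.
  - intros [k H]. exists (Z.to_nat (k mod 6)). split.
    + apply in_seq. pose proof (tonat_lt k). lia.
    + apply Cb_iff. unfold Cp.
      rewrite F0 in H. change (k+1) with (k + Z.of_nat 1) in H.
      change (k+2) with (k + Z.of_nat 2) in H. change (k+3) with (k + Z.of_nat 3) in H.
      change (k+4) with (k + Z.of_nat 4) in H. change (k+5) with (k + Z.of_nat 5) in H.
      rewrite !Fk in H. exact H.
  - intros [r [Hr H]]. apply in_seq in Hr. apply Cb_iff in H. exists (Z.of_nat r).
    rewrite F0. change (Z.of_nat r + 1) with (Z.of_nat r + Z.of_nat 1).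
    change (Z.of_nat r + 2) with (Z.of_nat r + Z.of_nat 2).
    change (Z.of_nat r + 3) with (Z.of_nat r + Z.of_nat 3).
    change (Z.of_nat r + 4) with (Z.of_nat r + Z.of_nat 4).
    change (Z.of_nat r + 5) with (Z.of_nat r + Z.of_nat 5).
    rewrite !Fk, !tonat_r by lia. exact H.
Qed.

Lemma main_aux : exactly_one (caseA col) (caseB col) (caseC col).
Proof.
  eapply xor3_exactly; [apply caseA_iff | apply caseB_iff | apply caseC_iff |].
  exact final_full.
Qed.

End Main.

Theorem mainTheorem3 (col : pt -> nat)
  (Hproper : proper_4col_J col)
  (Hnomono : forall c : pt, norm2 c <= 3 -> no_mono_triple col c) :
  exactly_one (caseA col) (caseB col) (caseC col).
Proof. exact (main_aux col Hproper Hnomono). Qed.
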